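(* Under the hypotheses and notation of the preceding statement (Theorem 1), with $\tilde L_n,\tilde U_n$ defined by the recursion there, the following hold almost surely for every $n\ge1$: $$0\le\tilde L_{n-1}\le\tilde L_n\le\tilde U_n\le\tilde U_{n-1}\le1,\qquad \tilde U_n-\tilde L_n=(\tilde U_{n-1}-\tilde L_{n-1})\,\frac{U_n-L_n}{U_n^*-L_n^*},$$ and moreover $\mathbb{E}\tilde L_n=\mathbb{E}L_n=l_n$ and $\mathbb{E}\tilde U_n=\mathbb{E}U_n=u_n$ for every $n\ge1$.
   Context: Setting: $s\in[0,1]$; random variables $L_n,U_n$ ($n\ge1$), $L_0\equiv0$, $U_0\equiv1$; $\mathcal{F}_0$ trivial, $\mathcal{F}_n=\sigma\{L_n,U_n\}$, $\mathcal{F}_{k,\infty}=\sigma\{\mathcal{F}_k,\mathcal{F}_{k+1},\dots\}$; a.s. $L_n\le U_n$, $L_n,U_n\in[0,1]$; $\mathbb{E}L_n=l_n\nearrow s$, $\mathbb{E}U_n=u_n\searrow s$; $\mathbb{E}(L_{n-1}\mid\mathcal{F}_{n,\infty})=\mathbb{E}(L_{n-1}\mid\mathcal{F}_n)\le L_n$ and $\mathbb{E}(U_{n-1}\mid\mathcal{F}_{n,\infty})=\mathbb{E}(U_{n-1}\mid\mathcal{F}_n)\ge U_n$ a.s.; $L_n^*=\mathbb{E}(L_{n-1}\mid\mathcal{F}_n)$, $U_n^*=\mathbb{E}(U_{n-1}\mid\mathcal{F}_n)$ with $U_n^*>L_n^*$ a.s.; $\tilde L_0=0$, $\tilde U_0=1$,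 $\tilde L_n=\tilde L_{n-1}+\frac{L_n-L_n^*}{U_n^*-L_n^*}(\tilde U_{n-1}-\tilde L_{n-1})$, $\tilde U_n=\tilde U_{n-1}-\frac{U_n^*-U_n}{U_n^*-L_n^*}(\tilde U_{n-1}-\tilde L_{n-1})$. *)

(* Defs.v *)
From HB Require Import structures.
From mathcomp Require Import all_boot all_order all_algebra.
From mathcomp Require Import all_classical all_reals all_analysis.
Set Implicit Arguments. Unset Strict Implicit. Unset Printing Implicit Defensive.
Import Order.TTheory GRing.Theory Num.Theory.
Local Open Scope classical_set_scope.
Local Open Scope ring_scope.

Section defs.
Context {d : measure_display} {T : measurableType d} {R : realType}.

Definition gen_sigma (fs : set (T -> R)) : set (set T) :=
  <<s [set A | exists f, fs f /\ exists B : set R, measurable B /\ A = f @^-1` B] >>.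

Definition Fn (L U : nat -> T -> R) (n : nat) : set (set T) :=
  gen_sigma [set f | f = L n \/ f = U n].

Definition Ftail (L U : nat -> T -> R) (n : nat) : set (set T) :=
  gen_sigma [set f | exists k, (n <= k)%N /\ (f = L k \/ f = U k)].

Definition G_measurable (G : set (set T)) (Y : T -> R) : Prop :=
  forall B : set R, measurable B -> G (Y @^-1` B).

Definition is_cond_exp (P : probability T R) (G : set (set T)) (X Y : T -> R) : Prop :=
  [/\ G_measurable G Y, P.-integrable setT (EFin \o Y) &
      forall A, G A -> (\int[P]_(x in A) (Y x)%:E = \int[P]_(x in A) (X x)%:E)%E].

(* the recursion defining (tilde L_n, tilde U_n), given L*_n = Ls n, U*_n = Us n *)
Fixpoint tildeLU (L U Ls Us : nat -> T -> R) (n : nat) : (T -> R) * (T -> R) :=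
  match n with
  | 0 => (fun _ => 0, fun _ => 1)
  | m.+1 =>
    let p := tildeLU L U Ls Us m in
    (fun x => p.1 x + (L m.+1 x - Ls m.+1 x) / (Us m.+1 x - Ls m.+1 x) * (p.2 x - p.1 x),
     fun x => p.2 x - (Us m.+1 x - U m.+1 x) / (Us m.+1 x - Ls m.+1 x) * (p.2 x - p.1 x))
  end.

Definition tildeL L U Ls Us n := (tildeLU L U Ls Us n).1.
Definition tildeU L U Ls Us n := (tildeLU L U Ls Us n).2.

End defs.

(* Main.v *)
Require Import Defs.
From HB Require Import structures.
From mathcomp Require Import all_boot all_order all_algebra.
From mathcomp Require Import all_classical all_reals all_analysis.
From Stdlib Require Import Lia.
From mathcomp Require Import ring lra zify.
From mathcomp Require Import measurable_realfun.
Import Order.TTheory GRing.Theory Num.Theory.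
Local Open Scope classical_set_scope.
Local Open Scope ring_scope.


Lemma step_alg (R : realType) (l u ls us tl tu : R) :
  ls <= l -> l <= u -> u <= us -> ls < us -> 0 <= tl -> tl <= tu -> tu <= 1 ->
  let tl' := tl + (l - ls) / (us - ls) * (tu - tl) in
  let tu' := tu - (us - u) / (us - ls) * (tu - tl) in
  [/\ [/\ 0 <= tl, tl <= tl', tl' <= tu', tu' <= tu & tu <= 1],
      tu' - tl' = (tu - tl) * ((u - l) / (us - ls)) &
      [/\ 0 <= (l - ls) / (us - ls), (l - ls) / (us - ls) <= 1,
          0 <= (us - u) / (us - ls) & (us - u) / (us - ls) <= 1]].
Proof.
move=> h1 h2 h3 h4 h5 h6 h7 tl' tu'.
have hd : 0 < us - ls by rewrite subr_gt0.
have hd0 : us - ls != 0 by rewrite gt_eqF.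
have eq : tu' - tl' = (tu - tl) * ((u - l) / (us - ls)).
  rewrite /tu' /tl'; field; exact: hd0.
have a0 : 0 <= (l - ls) / (us - ls) by rewrite divr_ge0 // ?subr_ge0 // ltW.
have b0 : 0 <= (us - u) / (us - ls) by rewrite divr_ge0 // ?subr_ge0 // ltW.
have a1 : (l - ls) / (us - ls) <= 1 by rewrite ler_pdivrMr // mul1r lerB //; lra.
have b1 : (us - u) / (us - ls) <= 1 by rewrite ler_pdivrMr // mul1r lerB //; lra.
have c0 : 0 <= (u - l) / (us - ls) by rewrite divr_ge0 // ?subr_ge0 // ltW.
have D0 : 0 <= tu - tl by rewrite subr_ge0.
split => //; split => //.
- by rewrite /tl' lerDl mulr_ge0.
- by rewrite -subr_ge0 eq mulr_ge0.
- by rewrite /tu' lerBlDr lerDl mulr_ge0.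
Qed.

Lemma measurable_inv (R : realType) : measurable_fun setT (@GRing.inv R).
Proof.
have -> : [set: R] = [set x | x != 0] `|` [set 0].
  by apply/seteqP; split => x //= _; case: (eqVneq x 0) => [->|h]; [right|left].
have eC : [set x : R | x != 0] = ~` [set 0].
  by apply/seteqP; split => x /=; [move/eqP|move/eqP].
have m0 : measurable [set x : R | x != 0].
  by rewrite eC; apply: measurableC.
apply/measurable_funU => //; split.
- apply: measurable_realfun.open_continuous_measurable_fun.
    by rewrite eC; apply: closed_openC; apply: compact_closed; [exact: Rhausdorff|exact: compact_set1].
  by move=> x /set_mem; exact: inv_continuous.
- move=> _ Y mY; have [Y0|Y0] := pselect (Y (0 : R)^-1).
    rewrite (_ : _ `&` _ = [set 0]) //.
    by apply/seteqP; split => x /= => [[]|->] //.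
  rewrite (_ : _ `&` _ = set0) //.
  by apply/seteqP; split => x //= [-> ].
Qed.


Section aux.
Context {d : measure_display} {T : measurableType d} {R : realType}.
Variable P : probability T R.

Lemma bnd_of (h : T -> R) M D : (forall x, `|h x| <= M) -> [bounded h x | x in D].
Proof.
move=> hM; exists M; split; first by rewrite num_real.
by move=> y My x _; apply: le_trans (hM x) (ltW My).
Qed.

Lemma iB (f g : T -> R) : P.-integrable setT (EFin \o f) ->
  P.-integrable setT (EFin \o g) -> P.-integrable setT (EFin \o (fun x => f x - g x)).
Proof.
move=> hf hg; have := integrableB measurableT hf hg.
by apply: eq_integrable => // x _ /=; rewrite EFinB.
Qed.

Lemma iD (f g : T -> R) : P.-integrable setT (EFin \o f) ->
  P.-integrable setT (EFin \o g) -> P.-integrable setT (EFin \o (fun x => f x + g x)).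
Proof.
move=> hf hg; have := integrableD measurableT hf hg.
by apply: eq_integrable => // x _ /=; rewrite EFinD.
Qed.

Lemma iM (h f : T -> R) M : measurable_fun setT h -> (forall x, `|h x| <= M) ->
  P.-integrable setT (EFin \o f) -> P.-integrable setT (EFin \o (fun x => h x * f x)).
Proof.
move=> mh hM hf; have := integrableMr measurableT mh (bnd_of _ _ setT hM) hf.
by apply: eq_integrable => // x _ /=; rewrite EFinM.
Qed.

Lemma iS (A : set T) (f : T -> R) : measurable A -> P.-integrable setT (EFin \o f) ->
  P.-integrable A (EFin \o f).
Proof. by move=> mA; apply: integrableS. Qed.

Lemma iae (f : T -> R) M : measurable_fun setT f -> {ae P, forall x, `|f x| <= M} ->
  P.-integrable setT (EFin \o f).
Proof.
move=> mf hM; apply/integrableP; split; first exact/measurable_EFinP.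
apply: (@le_lt_trans _ _ ((`|M| + 1)%:E * P setT)%E).
  apply: integral_le_bound => //.
  - exact/measurable_EFinP.
  - apply: filterS hM => x hx _ /=; rewrite lee_fin; apply: le_trans hx _.
    by rewrite (le_trans (ler_norm _)) // lerDl.
by rewrite probability_setT mule1 ltry.
Qed.

Lemma Rae (f g : T -> R) : measurable_fun setT f -> measurable_fun setT g ->
  {ae P, forall x, f x = g x} -> \int[P]_x f x = \int[P]_x g x.
Proof.
move=> mf mg hfg; congr fine; apply: ae_eq_integral => //.
- exact/measurable_EFinP.
- exact/measurable_EFinP.
- by apply: filterS hfg => x /= ->.
Qed.

Lemma Rext (f : T -> R) : P.-integrable setT (EFin \o f) ->
  (\int[P]_x (f x)%:E)%E = (\int[P]_x f x)%:E.
Proof. by move=> hf; rewrite fineK // integrable_fin_num. Qed.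

End aux.


Lemma count_sum (R : realType) (K m : nat) :
  \sum_(j < K) (((j < m)%N)%:R : R) = (minn K m)%:R.
Proof.
elim: K => [|K IH]; first by rewrite big_ord0 min0n.
rewrite big_ord_recr /= IH; case: (ltnP K m) => hK.
  by rewrite -natrD addn1 !minnE; congr (_%:R); lia.
by rewrite addr0 !minnE; congr (_%:R); lia.
Qed.

Section ext.
Context {d : measure_display} {T : measurableType d} {R : realType}.
Variable P : probability T R.
Variables (S : set (set T)) (hS : <<s S>> `<=` measurable).

Lemma GT_T (h : T -> R) :
  measurable_fun (setT : set (g_sigma_algebraType S)) h -> measurable_fun setT h.
Proof. by move=> mh _ Y mY; apply: hS; exact: (mh measurableT Y mY). Qed.

Lemma ext (X Y : T -> R) : P.-integrable setT (EFin \o X) ->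
  P.-integrable setT (EFin \o Y) ->
  (forall A, <<s S>> A -> \int[P]_(x in A) X x = \int[P]_(x in A) Y x) ->
  forall h : T -> R, measurable_fun (setT : set (g_sigma_algebraType S)) h ->
  (forall x, 0 <= h x <= 1) ->
  \int[P]_x (h x * X x) = \int[P]_x (h x * Y x).
Proof.
move=> iX iY hXY h mh h01.
pose Z x := X x - Y x.
have iZ : P.-integrable setT (EFin \o Z) := iB P _ _ iX iY.
have mhT := GT_T h mh.
have hZA A : <<s S>> A -> \int[P]_x (\1_A x * Z x) = 0.
  move=> GA; have mA := hS _ GA.
  transitivity (\int[P]_(x in A) Z x).
    rewrite [RHS]Rintegral_mkcond patch_indic; apply: eq_Rintegral => x _ /=.
    by rewrite mulrC.
  rewrite /Z RintegralB //; try exact: iS.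
  by rewrite hXY // subrr.
have hsum (A : nat -> set T) : (forall j, <<s S>> (A j)) -> forall n,
    \int[P]_x ((\sum_(j < n) \1_(A j) x) * Z x) = 0.
  move=> GA; elim=> [|n IH].
    by under eq_Rintegral do rewrite big_ord0 mul0r; rewrite Rintegral_cst // mul0r.
  under eq_Rintegral do rewrite big_ord_recr /= mulrDl.
  rewrite RintegralD //; last first.
  - apply: (iM P _ _ 1) => //; first by apply/measurable_indicP; exact: hS.
    by move=> x; rewrite indicE; case: (_ \in _); rewrite ?normr1 ?normr0.
  - apply: (iM P _ _ n%:R) => //.
      by apply: measurable_sum => j; apply/measurable_indicP; exact: hS.
    move=> x; apply: le_trans (ler_norm_sum _ _ _) _.
    rewrite -[n in n%:R]card_ord -sumr_const; apply: ler_sum => j _.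
    by rewrite indicE; case: (_ \in _); rewrite ?normr1 ?normr0.
  by rewrite IH hZA // add0r.
have key (K : nat) : (0 < K)%N ->
    `|\int[P]_x (h x * Z x)| <= K%:R^-1 * \int[P]_x `|Z x|.
  move=> K0.
  have K0' : (0 : R) < K%:R by rewrite ltr0n.
  pose A j := h @^-1` `[(j.+1)%:R / K%:R, +oo[.
  have GA j : <<s S>> (A j).
    by have := mh measurableT _ (measurable_itv `[(j.+1)%:R / K%:R, +oo[); rewrite setTI.
  pose g (x : T) : R := K%:R^-1 * \sum_(j < K) \1_(A j) x.
  have mg : measurable_fun setT g.
    apply: (measurable_funM (measurable_cst _)).
    by apply: measurable_sum => j; apply/measurable_indicP; exact: hS.
  have hg x : `|h x - g x| <= K%:R^-1.
    have /andP[h0 h1] := h01 x.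
    set y := K%:R * h x.
    have y0 : 0 <= y by rewrite mulr_ge0.
    have ind j : \1_(A j) x = ((j < Num.truncn y)%N)%:R :> R.
      rewrite indicE; congr (_%:R); rewrite truncn_ge_nat //; congr (nat_of_bool _).
      apply/ssrbool.idP/ssrbool.idP => [hA|hj].
        move/set_mem: hA; rewrite /A /= in_itv /= andbT.
        by rewrite ler_pdivrMr // mulrC.
      by apply/mem_set; rewrite /A /= in_itv /= andbT ler_pdivrMr // mulrC.
    have mK : (Num.truncn y <= K)%N.
      by rewrite truncn_le_nat /y; apply: (@le_lt_trans _ _ (K%:R)); [rewrite ler_piMr|rewrite ltr_nat].
    rewrite /g; under eq_bigr do rewrite ind.
    rewrite count_sum (minn_idPr mK).
    have /andP[t1 t2] := truncn_itv y0.
    rewrite (_ : h x - _ = K%:R^-1 * (y - (Num.truncn y)%:R)); last first.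
      by rewrite /y; field; rewrite gt_eqF.
    rewrite normrM ger0_norm ?invr_ge0 ?ler0n // ger0_norm ?subr_ge0 //.
    rewrite ler_piMr ?invr_ge0 ?ler0n //.
    by rewrite -natr1 in t2; lra.
  have igZ : P.-integrable setT (EFin \o (fun x => g x * Z x)).
    apply: (iM P _ _ 2) => // x.
    apply: le_trans (_ : `|h x| + `|g x - h x| <= _).
      by rewrite -[X in `|X|](subrK (h x)) addrC ler_normD.
    rewrite distrC; apply: lerD; first by rewrite ger0_norm //; case/andP: (h01 x).
    by apply: le_trans (hg x) _; rewrite invf_le1 // ler1n.
  have ihgZ : P.-integrable setT (EFin \o (fun x => (h x - g x) * Z x)).
    apply: (iM P _ _ K%:R^-1) => //.
    exact: measurable_funB.
  have -> : \int[P]_x (h x * Z x) = \int[P]_x ((h x - g x) * Z x) + \int[P]_x (g x * Z x).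
    rewrite -RintegralD //; apply: eq_Rintegral => x _; ring.
  have -> : \int[P]_x (g x * Z x) = 0.
    under eq_Rintegral do rewrite /g -mulrA.
    rewrite RintegralZl //; last first.
      apply: (iM P _ _ K%:R) => //.
        by apply: measurable_sum => j; apply/measurable_indicP; exact: hS.
      move=> x; apply: le_trans (ler_norm_sum _ _ _) _.
      rewrite -[K in K%:R]card_ord -sumr_const; apply: ler_sum => j _.
      by rewrite indicE; case: (_ \in _); rewrite ?normr1 ?normr0.
    by rewrite hsum // mulr0.
  rewrite addr0; apply: le_trans (le_normr_Rintegral _ ihgZ) _ => //.
  rewrite -RintegralZl //; last exact: integrable_norm.
  apply: le_Rintegral => //.
  - exact: integrable_norm.
  - have := iM P (fun _ => K%:R^-1) _ (K%:R^-1) (measurable_cst _) _ (integrable_norm iZ).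
    apply => x; by rewrite ger0_norm // invr_ge0 ler0n.
  - by move=> x _ /=; rewrite normrM ler_wpM2r.
have hZ0 : \int[P]_x (h x * Z x) = 0.
  apply/normr0_eq0/eqP; rewrite eq_le normr_ge0 andbT.
  set a := `|_|; set c := \int[P]_x `|Z x|.
  have c0 : 0 <= c by apply: Rintegral_ge0.
  rewrite leNgt; apply/negP => a0.
  have := key (Num.truncn (c / a)).+1 isT.
  apply/negP; rewrite -ltNge ltr_pdivrMl ?ltr0n //.
  rewrite -ltr_pdivrMr //; exact: truncnS_gt.
transitivity (\int[P]_x (h x * Y x) + \int[P]_x (h x * Z x)); last by rewrite hZ0 addr0.
rewrite -RintegralD //; first by apply: eq_Rintegral => x _; rewrite /Z; ring.
- by apply: (iM P _ _ 1) => // x; have /andP[? ?] := h01 x; rewrite ger0_norm.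
- by apply: (iM P _ _ 1) => // x; have /andP[? ?] := h01 x; rewrite ger0_norm.
Qed.
End ext.


Lemma mratio {d'} {T' : measurableType d'} {R : realType} (a b c e : T' -> R) :
  measurable_fun setT a -> measurable_fun setT b -> measurable_fun setT c ->
  measurable_fun setT e -> measurable_fun setT (fun x => (a x - b x) / (c x - e x)).
Proof.
move=> ma mb mc me; apply: measurable_funM; first exact: measurable_funB.
exact: measurableT_comp (measurable_inv R) (measurable_funB mc me).
Qed.

Lemma mclamp {d'} {T' : measurableType d'} {R : realType} (a : T' -> R) :
  measurable_fun setT a -> measurable_fun setT (fun x => Num.min (Num.max (a x) 0) 1).
Proof.
move=> ma; apply: measurable_minr; last exact: measurable_cst.
by apply: measurable_maxr => //; exact: measurable_cst.
Qed.

Arguments ext {d T R} P {S} hS {X Y} iX iY hXY {h} mh h01.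

Section aeh.
Context {d : measure_display} {T : measurableType d} {R : realType}.
Variable P : probability T R.
Lemma aeI2 (A B : T -> Prop) : {ae P, forall x, A x} -> {ae P, forall x, B x} ->
  {ae P, forall x, A x /\ B x}.
Proof. by move=> hA hB; exact: (@filterI _ _ (ae_filter_ringOfSetsType P) _ _ hA hB). Qed.
Lemma aeS (A B : T -> Prop) : (forall x, A x -> B x) -> {ae P, forall x, A x} ->
  {ae P, forall x, B x}.
Proof. by move=> hAB hA; exact: (@filterS _ _ (ae_filter_ringOfSetsType P) _ _ hAB hA). Qed.
End aeh.
Arguments aeI2 {d T R P A B}.
Arguments aeS {d T R P A B}.

Section main.
Context {d : measure_display} {T : measurableType d} {R : realType}.
Variables (P : probability T R) (L U Ls Us : nat -> T -> R).
Hypotheses (mL : forall n, measurable_fun setT (L n))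
  (mU : forall n, measurable_fun setT (U n))
  (L0 : L 0%N = (fun _ => 0)) (U0 : U 0%N = (fun _ => 1))
  (hLU : forall n, {ae P, forall x, L n x <= U n x})
  (hL01 : forall n, {ae P, forall x, 0 <= L n x <= 1})
  (hU01 : forall n, {ae P, forall x, 0 <= U n x <= 1})
  (hLs : forall n, (0 < n)%N ->
     [/\ is_cond_exp P (Fn L U n) (L n.-1) (Ls n),
         is_cond_exp P (Ftail L U n) (L n.-1) (Ls n) &
         {ae P, forall x, Ls n x <= L n x}])
  (hUs : forall n, (0 < n)%N ->
     [/\ is_cond_exp P (Fn L U n) (U n.-1) (Us n),
         is_cond_exp P (Ftail L U n) (U n.-1) (Us n) &
         {ae P, forall x, U n x <= Us n x}])
  (hsep : forall n, (0 < n)%N -> {ae P, forall x, Ls n x < Us n x}).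

Let S k : set (set T) := [set A | exists f, (exists j, (k <= j)%N /\ (f = L j \/ f = U j))
   /\ exists B : set R, measurable B /\ A = f @^-1` B].
Let GT k := g_sigma_algebraType (S k).

Lemma FtailE k : Ftail L U k = <<s S k>>. Proof. by []. Qed.

Lemma SmeasT k : <<s S k>> `<=` measurable.
Proof.
apply: smallest_sub; first exact: sigma_algebra_measurable.
move=> _ [f [[j [_ [->|->]]] [B [mB ->]]]].
- by rewrite -[_ @^-1` _]setTI; exact: mL.
- by rewrite -[_ @^-1` _]setTI; exact: mU.
Qed.

Lemma Smono k j : (k <= j)%N -> <<s S j>> `<=` <<s S k>>.
Proof.
move=> kj; apply: smallest_sub; first exact: smallest_sigma_algebra.
move=> A [f [[i [ji hf]] hB]]; apply: sub_sigma_algebra.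
by exists f; split => //; exists i; split => //; exact: leq_trans ji.
Qed.

Lemma GTmono k j (f : T -> R) : (k <= j)%N ->
  measurable_fun (setT : set (GT j)) f -> measurable_fun (setT : set (GT k)) f.
Proof. by move=> kj mf _ B mB; apply: Smono kj _ (mf measurableT B mB). Qed.

Lemma GmeasP k (f : T -> R) : G_measurable (Ftail L U k) f ->
  measurable_fun (setT : set (GT k)) f.
Proof. by move=> hf _ B mB; rewrite setTI; exact: hf. Qed.

Lemma mLG k j : (k <= j)%N -> measurable_fun (setT : set (GT k)) (L j).
Proof.
move=> kj _ B mB; rewrite setTI; apply: sub_sigma_algebra.
by exists (L j); split; [exists j; split => //; left|exists B].
Qed.

Lemma mUG k j : (k <= j)%N -> measurable_fun (setT : set (GT k)) (U j).
Proof.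
move=> kj _ B mB; rewrite setTI; apply: sub_sigma_algebra.
by exists (U j); split; [exists j; split => //; right|exists B].
Qed.

Lemma GT_T' k (f : T -> R) : measurable_fun (setT : set (GT k)) f -> measurable_fun setT f.
Proof. exact: (@GT_T _ _ _ (S k) (@SmeasT k) f). Qed.

Lemma mLsG k : measurable_fun (setT : set (GT k.+1)) (Ls k.+1).
Proof. by case: (hLs k.+1 isT) => _ [+ _ _] _; exact: GmeasP. Qed.

Lemma mUsG k : measurable_fun (setT : set (GT k.+1)) (Us k.+1).
Proof. by case: (hUs k.+1 isT) => _ [+ _ _] _; exact: GmeasP. Qed.

Lemma mLs k : measurable_fun setT (Ls k.+1). Proof. exact: GT_T' (mLsG k). Qed.
Lemma mUs k : measurable_fun setT (Us k.+1). Proof. exact: GT_T' (mUsG k). Qed.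

Lemma iLs k : P.-integrable setT (EFin \o Ls k.+1).
Proof. by case: (hLs k.+1 isT) => _ [_ + _] _. Qed.
Lemma iUs k : P.-integrable setT (EFin \o Us k.+1).
Proof. by case: (hUs k.+1 isT) => _ [_ + _] _. Qed.

Lemma iL k : P.-integrable setT (EFin \o L k).
Proof.
apply: (iae P _ 1) => //; apply: aeS (hL01 k) => x /andP[h0 h1].
by rewrite ger0_norm.
Qed.
Lemma iU k : P.-integrable setT (EFin \o U k).
Proof.
apply: (iae P _ 1) => //; apply: aeS (hU01 k) => x /andP[h0 h1].
by rewrite ger0_norm.
Qed.

Lemma cLs k A : Ftail L U k.+1 A ->
  \int[P]_(x in A) Ls k.+1 x = \int[P]_(x in A) L k x.
Proof. by case: (hLs k.+1 isT) => _ [_ _ +] _ hA => /(_ A hA) h; rewrite /Rintegral h. Qed.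
Lemma cUs k A : Ftail L U k.+1 A ->
  \int[P]_(x in A) Us k.+1 x = \int[P]_(x in A) U k x.
Proof. by case: (hUs k.+1 isT) => _ [_ _ +] _ hA => /(_ A hA) h; rewrite /Rintegral h. Qed.

Local Notation tL := (tildeL L U Ls Us).
Local Notation tU := (tildeU L U Ls Us).

Lemma tLS m x : tL m.+1 x = tL m x +
  (L m.+1 x - Ls m.+1 x) / (Us m.+1 x - Ls m.+1 x) * (tU m x - tL m x).
Proof. by []. Qed.
Lemma tUS m x : tU m.+1 x = tU m x -
  (Us m.+1 x - U m.+1 x) / (Us m.+1 x - Ls m.+1 x) * (tU m x - tL m x).
Proof. by []. Qed.

Lemma mt m : measurable_fun setT (tL m) /\ measurable_fun setT (tU m).
Proof.
elim: m => [|m [IHL IHU]]; first by split; exact: measurable_cst.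
have mD : measurable_fun setT (fun x => tU m x - tL m x) := measurable_funB IHU IHL.
split.
- apply: (measurable_funD IHL); apply: measurable_funM mD.
  exact: mratio (mL _) (mLs _) (mUs _) (mLs _).
- apply: (measurable_funB IHU); apply: measurable_funM mD.
  exact: mratio (mUs _) (mU _) (mUs _) (mLs _).
Qed.

Definition good x := forall m, [/\ Ls m.+1 x <= L m.+1 x, L m.+1 x <= U m.+1 x,
  U m.+1 x <= Us m.+1 x & Ls m.+1 x < Us m.+1 x].

Lemma aegood : {ae P, forall x, good x}.
Proof.
apply: ae_foralln => m.
case: (hLs m.+1 isT) => _ _ h1; case: (hUs m.+1 isT) => _ _ h2.
have H1 := aeI2 h1 h2; have H2 := aeI2 (hLU m.+1) (hsep m.+1 isT).
by apply: aeS (aeI2 H1 H2) => x [[a b] [c e]]; split.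
Qed.

Lemma goodt x : good x -> forall m, 0 <= tL m x /\ tL m x <= tU m x /\ tU m x <= 1.
Proof.
move=> gx; elim=> [|m [h0 [h1 h2]]]; first by rewrite /tildeL /tildeU /= ler01 lexx.
case: (gx m) => g1 g2 g3 g4.
have [[a1 a2 a3 a4 a5] _ _] := step_alg _ _ _ _ _ _ _ g1 g2 g3 g4 h0 h1 h2.
rewrite tLS tUS; split; [exact: le_trans a2|split => //].
exact: le_trans a4 a5.
Qed.

Lemma it m : P.-integrable setT (EFin \o tL m) /\ P.-integrable setT (EFin \o tU m).
Proof.
have [m1 m2] := mt m.
split; apply: (iae P _ 1) => //; apply: aeS aegood => x gx;
  have [h0 [h1 h2]] := goodt x gx m.
- by rewrite ger0_norm // (le_trans h1).
- by rewrite ger0_norm // (le_trans h0).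
Qed.

Lemma RaeA A (f g : T -> R) : measurable A -> measurable_fun setT f -> measurable_fun setT g ->
  {ae P, forall x, f x = g x} -> \int[P]_(x in A) f x = \int[P]_(x in A) g x.
Proof.
move=> mA mf mg hfg; rewrite [LHS]Rintegral_mkcond [RHS]Rintegral_mkcond.
apply: Rae.
- by apply/(measurable_restrictT _ mA); exact: measurable_funTS.
- by apply/(measurable_restrictT _ mA); exact: measurable_funTS.
- by apply: aeS hfg => x hx; rewrite !patchE hx.
Qed.

Lemma keyG m : (forall A, Ftail L U m A ->
    \int[P]_(x in A) tL m x = \int[P]_(x in A) L m x /\
    \int[P]_(x in A) tU m x = \int[P]_(x in A) U m x) ->
  forall A, Ftail L U m.+1 A -> forall c : T -> R,
  measurable_fun (setT : set (GT m.+1)) c -> {ae P, forall x, 0 <= c x <= 1} ->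
  \int[P]_(x in A) (c x * (tU m x - tL m x)) =
  \int[P]_(x in A) (c x * (Us m.+1 x - Ls m.+1 x)).
Proof.
move=> IH A hA c mc c01.
have mA : measurable A := SmeasT m.+1 A hA.
have [mtL mtU] := mt m; have [itL itU] := it m.
pose k x := Num.min (Num.max (c x) 0) 1.
have mk : measurable_fun (setT : set (GT m.+1)) k := mclamp _ mc.
have mkT : measurable_fun setT k := GT_T' _ _ mk.
have k01 x : 0 <= k x <= 1.
  rewrite /k; apply/andP; split; first by rewrite le_min ler01 le_max lexx orbT.
  by rewrite ge_min lexx orbT.
have hck : {ae P, forall x, c x = k x}.
  apply: aeS c01 => x /andP[h0 h1].
  by rewrite /k (max_idPl h0) (min_idPl h1).
pose hh x := \1_A x * k x.
have mAG : measurable (A : set (GT m.+1)) := hA.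
have mhh : measurable_fun (setT : set (GT m.+1)) hh.
  by apply: measurable_funM mk; apply/measurable_indicP.
have hh01 x : 0 <= hh x <= 1.
  by rewrite /hh indicE; case: (_ \in _); rewrite ?mul1r ?mul0r ?lexx ?ler01 // k01.
have mcT := GT_T' _ _ mc.
have conv (F : T -> R) : measurable_fun setT F ->
    \int[P]_(x in A) (c x * F x) = \int[P]_x (hh x * F x).
  move=> mF; rewrite (@RaeA A _ (fun x => k x * F x)) //.
  - rewrite Rintegral_mkcond patch_indic; apply: eq_Rintegral => x _ /=.
    by rewrite /hh; ring.
  - exact: measurable_funM.
  - exact: measurable_funM.
  - by apply: aeS hck => x ->.
rewrite conv; last exact: measurable_funB.
rewrite conv; last exact: measurable_funB (mUs m) (mLs m).
have ihh (F : T -> R) : P.-integrable setT (EFin \o F) ->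
    P.-integrable setT (EFin \o (fun x => hh x * F x)).
  move=> iF; apply: (iM P _ _ 1) => //; first exact: GT_T' _ _ mhh.
  by move=> x; have /andP[? ?] := hh01 x; rewrite ger0_norm.
under eq_Rintegral do rewrite mulrBr.
rewrite RintegralB //; try exact: ihh.
under [RHS]eq_Rintegral do rewrite mulrBr.
rewrite RintegralB //; try exact: ihh (iUs m); try exact: ihh (iLs m).
have mhm := GTmono m m.+1 hh (leqnSn m) mhh.
rewrite (ext P (SmeasT m) itU (iU m) (fun B hB => (IH B hB).2) mhm hh01).
rewrite (ext P (SmeasT m) itL (iL m) (fun B hB => (IH B hB).1) mhm hh01).
rewrite (ext P (SmeasT m.+1) (iU m) (iUs m) (fun B hB => esym (cUs m B hB)) mhh hh01).
by rewrite (ext P (SmeasT m.+1) (iL m) (iLs m) (fun B hB => esym (cLs m B hB)) mhh hh01).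
Qed.

Lemma ratio01 m : {ae P, forall x,
  [/\ 0 <= (L m.+1 x - Ls m.+1 x) / (Us m.+1 x - Ls m.+1 x) <= 1,
      0 <= (Us m.+1 x - U m.+1 x) / (Us m.+1 x - Ls m.+1 x) <= 1,
      (L m.+1 x - Ls m.+1 x) / (Us m.+1 x - Ls m.+1 x) * (Us m.+1 x - Ls m.+1 x)
        = L m.+1 x - Ls m.+1 x,
      (Us m.+1 x - U m.+1 x) / (Us m.+1 x - Ls m.+1 x) * (Us m.+1 x - Ls m.+1 x)
        = Us m.+1 x - U m.+1 x &
      [/\ 0 <= tL m x, tL m x <= tL m.+1 x, tL m.+1 x <= tU m.+1 x,
          tU m.+1 x <= tU m x & tU m x <= 1]
      /\ tU m.+1 x - tL m.+1 x = (tU m x - tL m x) *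
           ((U m.+1 x - L m.+1 x) / (Us m.+1 x - Ls m.+1 x))]}.
Proof.
apply: aeS aegood => x gx.
have [h0 [h1 h2]] := goodt x gx m.
case: (gx m) => g1 g2 g3 g4.
have [H1 H2 [a1 a2 b1 b2]] := step_alg _ _ _ _ _ _ _ g1 g2 g3 g4 h0 h1 h2.
have hd : Us m.+1 x - Ls m.+1 x != 0 by rewrite subr_eq0 gt_eqF.
split; [by rewrite a1 a2|by rewrite b1 b2|by rewrite divfK|by rewrite divfK|].
by split.
Qed.

Lemma Cm m : forall A, Ftail L U m A ->
    \int[P]_(x in A) tL m x = \int[P]_(x in A) L m x /\
    \int[P]_(x in A) tU m x = \int[P]_(x in A) U m x.
Proof.
elim: m => [|m IH] A hA.
  by split; apply: eq_Rintegral => x _; rewrite /tildeL /tildeU /= ?L0 ?U0.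
have mA : measurable A := SmeasT m.+1 A hA.
have hA' : Ftail L U m A := Smono m m.+1 (leqnSn m) A hA.
have [mtL mtU] := mt m; have [itL itU] := it m.
have [mtL' mtU'] := mt m.+1; have [itL' itU'] := it m.+1.
have mD : measurable_fun setT (fun x => tU m x - tL m x) := measurable_funB mtU mtL.
have mdd : measurable_fun setT (fun x => Us m.+1 x - Ls m.+1 x) :=
  measurable_funB (mUs m) (mLs m).
pose a x := (L m.+1 x - Ls m.+1 x) / (Us m.+1 x - Ls m.+1 x).
pose b x := (Us m.+1 x - U m.+1 x) / (Us m.+1 x - Ls m.+1 x).
have maG : measurable_fun (setT : set (GT m.+1)) a.
  exact: mratio (mLG m.+1 m.+1 (leqnn _)) (mLsG m) (mUsG m) (mLsG m).
have mbG : measurable_fun (setT : set (GT m.+1)) b.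
  exact: mratio (mUsG m) (mUG m.+1 m.+1 (leqnn _)) (mUsG m) (mLsG m).
have maT := GT_T' _ _ maG; have mbT := GT_T' _ _ mbG.
have a01 : {ae P, forall x, 0 <= a x <= 1} by apply: aeS (ratio01 m) => x [].
have b01 : {ae P, forall x, 0 <= b x <= 1} by apply: aeS (ratio01 m) => x [].
have iaD : P.-integrable setT (EFin \o (fun x => a x * (tU m x - tL m x))).
  apply: (iae P _ 1); first exact: measurable_funM.
  apply: aeS (ratio01 m) => x [/andP[? ?] _ _ _ [[h0 h1 h2 h3 h4] _]].
  rewrite ger0_norm; last by rewrite mulr_ge0 // subr_ge0 (le_trans h1) // (le_trans h2).
  rewrite mulr_ile1 // ?subr_ge0 ?(le_trans h1) ?(le_trans h2) //.
  by rewrite lerBlDr (le_trans h4) // lerDl.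
have ibD : P.-integrable setT (EFin \o (fun x => b x * (tU m x - tL m x))).
  apply: (iae P _ 1); first exact: measurable_funM.
  apply: aeS (ratio01 m) => x [_ /andP[? ?] _ _ [[h0 h1 h2 h3 h4] _]].
  rewrite ger0_norm; last by rewrite mulr_ge0 // subr_ge0 (le_trans h1) // (le_trans h2).
  rewrite mulr_ile1 // ?subr_ge0 ?(le_trans h1) ?(le_trans h2) //.
  by rewrite lerBlDr (le_trans h4) // lerDl.
have [IHL IHU] := IH A hA'.
split.
- transitivity (\int[P]_(x in A) (tL m x + a x * (tU m x - tL m x))).
    by apply: eq_Rintegral => x _; rewrite tLS.
  rewrite RintegralD //; try exact: iS.
  rewrite (keyG m IH A hA a maG a01).
  rewrite (@RaeA A (fun x => a x * (Us m.+1 x - Ls m.+1 x)) (fun x => L m.+1 x - Ls m.+1 x) mA); first last.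
  + by apply: aeS (ratio01 m) => x [].
  + exact: measurable_funB (mL _) (mLs m).
  + exact: measurable_funM.
  rewrite RintegralB //; try exact: iS (iL _); try exact: iS (iLs m).
  by rewrite IHL -(cLs m A hA) addrC subrK.
- transitivity (\int[P]_(x in A) (tU m x - b x * (tU m x - tL m x))).
    by apply: eq_Rintegral => x _; rewrite tUS.
  rewrite RintegralB //; try exact: iS.
  rewrite (keyG m IH A hA b mbG b01).
  rewrite (@RaeA A (fun x => b x * (Us m.+1 x - Ls m.+1 x)) (fun x => Us m.+1 x - U m.+1 x) mA); first last.
  + by apply: aeS (ratio01 m) => x [].
  + exact: measurable_funB (mUs m) (mU _).
  + exact: measurable_funM.
  rewrite RintegralB //; try exact: iS (iU _); try exact: iS (iUs m).
  by rewrite IHU -(cUs m A hA) opprB addrC subrK.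
Qed.

Lemma final n : (0 < n)%N ->
    [/\ {ae P, forall x,
           [/\ 0 <= tildeL L U Ls Us n.-1 x,
               tildeL L U Ls Us n.-1 x <= tildeL L U Ls Us n x,
               tildeL L U Ls Us n x <= tildeU L U Ls Us n x,
               tildeU L U Ls Us n x <= tildeU L U Ls Us n.-1 x &
               tildeU L U Ls Us n.-1 x <= 1]
           /\ tildeU L U Ls Us n x - tildeL L U Ls Us n x =
              (tildeU L U Ls Us n.-1 x - tildeL L U Ls Us n.-1 x) *
              ((U n x - L n x) / (Us n x - Ls n x))},
        ('E_P[tildeL L U Ls Us n] = 'E_P[L n])%E &
        ('E_P[tildeU L U Ls Us n] = 'E_P[U n])%E].
Proof.
case: n => // m _.
have [itL itU] := it m.+1.
have hT : Ftail L U m.+1 setT := @measurableT _ (GT m.+1).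
have [e1 e2] := Cm m.+1 setT hT.
split.
- by apply: aeS (ratio01 m) => x [_ _ _ _ H]; exact: H.
- by rewrite unlock (Rext P _ itL) (Rext P _ (iL _)) e1.
- by rewrite unlock (Rext P _ itU) (Rext P _ (iU _)) e2.
Qed.

End main.

Theorem mainTheorem4 (d : measure_display) (T : measurableType d) (R : realType)
  (P : probability T R) (s : R) (L U Ls Us : nat -> T -> R) :
  0 <= s <= 1 ->
  (forall n, measurable_fun setT (L n)) ->
  (forall n, measurable_fun setT (U n)) ->
  L 0%N = (fun _ => 0) -> U 0%N = (fun _ => 1) ->
  (forall n, {ae P, forall x, L n x <= U n x}) ->
  (forall n, {ae P, forall x, 0 <= L n x <= 1}) ->
  (forall n, {ae P, forall x, 0 <= U n x <= 1}) ->
  (forall n, ('E_P[L n] <= 'E_P[L n.+1])%E) ->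
  ('E_P[L n] @[n --> \oo] --> s%:E)%E ->
  (forall n, ('E_P[U n.+1] <= 'E_P[U n])%E) ->
  ('E_P[U n] @[n --> \oo] --> s%:E)%E ->
  (forall n, (0 < n)%N ->
     [/\ is_cond_exp P (Fn L U n) (L n.-1) (Ls n),
         is_cond_exp P (Ftail L U n) (L n.-1) (Ls n) &
         {ae P, forall x, Ls n x <= L n x}]) ->
  (forall n, (0 < n)%N ->
     [/\ is_cond_exp P (Fn L U n) (U n.-1) (Us n),
         is_cond_exp P (Ftail L U n) (U n.-1) (Us n) &
         {ae P, forall x, U n x <= Us n x}]) ->
  (forall n, (0 < n)%N -> {ae P, forall x, Ls n x < Us n x}) ->
  forall n, (0 < n)%N ->
    [/\ {ae P, forall x,
           [/\ 0 <= tildeL L U Ls Us n.-1 x,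
               tildeL L U Ls Us n.-1 x <= tildeL L U Ls Us n x,
               tildeL L U Ls Us n x <= tildeU L U Ls Us n x,
               tildeU L U Ls Us n x <= tildeU L U Ls Us n.-1 x &
               tildeU L U Ls Us n.-1 x <= 1]
           /\ tildeU L U Ls Us n x - tildeL L U Ls Us n x =
              (tildeU L U Ls Us n.-1 x - tildeL L U Ls Us n.-1 x) *
              ((U n x - L n x) / (Us n x - Ls n x))},
        ('E_P[tildeL L U Ls Us n] = 'E_P[L n])%E &
        ('E_P[tildeU L U Ls Us n] = 'E_P[U n])%E].
Proof.
move=> _ mL mU L0 U0 hLU hL01 hU01 _ _ _ _ hLs hUs hsep n n0.
exact: (@final d T R P L U Ls Us mL mU L0 U0 hLU hL01 hU01 hLs hUs hsep n n0).
Qed.
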